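(* Let $\Lambda$ be a lattice of $\mathbf R^l$, $\Omega\in\mathbf R^l$, $R>0$, and assume $\Lambda^*_R\ne\emptyset$. Let $p\in\Lambda^*_R$ be such that $p\cdot\Omega=\alpha:=\alpha(\Lambda,\Omega,R)$, and assume $\alpha>0$. Let $E=\{p\}^\perp$. Then $\Lambda_0:=\Lambda\cap E$ is a lattice of $E$. Moreover, setting $(\Lambda_0)^*=\{q\in E:\ q\cdot x\in\mathbf Z\ \forall x\in\Lambda_0\}$, $(\Lambda_0)^*_{\sqrt3R/2}=\{q\in(\Lambda_0)^*:\ 0<|q|\le\sqrt3R/2\}$ and $\beta=\inf\{|q\cdot\Omega|:\ q\in(\Lambda_0)^*_{\sqrt3R/2}\}$: (i) $\dfrac{\alpha}{\beta|p|}\le\dfrac2R$; in particular $\alpha\le2\beta$; (ii) $\alpha(\Lambda,\Omega,\sqrt7R/2)\le\beta$.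
   Context: A lattice of $\mathbf R^l$ is a discrete subgroup $\Lambda$ with $\mathbf R^l/\Lambda$ of finite volume. $\Lambda^*=\{p\in\mathbf R^l:\ p\cdot\lambda\in\mathbf Z\ \forall\lambda\in\Lambda\}$, $\Lambda^*_R=\{p\in\Lambda^*:\ 0<|p|\le R\}$ with $|\cdot|$ Euclidean, $\alpha(\Lambda,\Omega,R)=\inf\{|p\cdot\Omega|:\ p\in\Lambda^*_R\}$, and $\inf\emptyset=+\infty$. *)

(* Defs.v *)
From mathcomp Require Import all_boot all_order all_algebra.
From mathcomp Require Import all_classical all_reals ereal.
Set Implicit Arguments. Unset Strict Implicit. Unset Printing Implicit Defensive.
Import Order.TTheory GRing.Theory Num.Theory.
Local Open Scope classical_set_scope.
Local Open Scope ring_scope.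

Definition dotv (R : realType) (l : nat) (x y : 'rV[R]_l) : R :=
  \sum_(i < l) x 0 i * y 0 i.

Definition normv (R : realType) (l : nat) (x : 'rV[R]_l) : R :=
  Num.sqrt (dotv x x).

Definition is_lattice_of (R : realType) (l : nat)
  (E : set 'rV[R]_l) (L : set 'rV[R]_l) : Prop :=
  exists (k : nat) (b : 'I_k -> 'rV[R]_l),
    (forall i, E (b i)) /\
    (forall c : 'I_k -> R, \sum_(i < k) c i *: b i = 0 -> forall i, c i = 0) /\
    (forall x, E x -> exists c : 'I_k -> R, x = \sum_(i < k) c i *: b i) /\
    (forall x, L x <-> exists z : 'I_k -> int, x = \sum_(i < k) (z i)%:~R *: b i).

Definition dual_in (R : realType) (l : nat) (E L : set 'rV[R]_l) : set 'rV[R]_l :=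
  [set q | E q /\ forall x, L x -> exists z : int, dotv q x = z%:~R].

Definition dual_ball (R : realType) (l : nat) (E L : set 'rV[R]_l) (r : R)
  : set 'rV[R]_l :=
  [set q | dual_in E L q /\ 0 < normv q /\ normv q <= r].

(* infimum of |q . Omega| over the dual ball, extended real; inf of empty set = +oo *)
Definition alpha_in (R : realType) (l : nat) (E L : set 'rV[R]_l)
  (Omega : 'rV[R]_l) (r : R) : \bar R :=
  ereal_inf [set (`|dotv q Omega|)%:E | q in dual_ball E L r].

Definition alpha (R : realType) (l : nat) (L : set 'rV[R]_l)
  (Omega : 'rV[R]_l) (r : R) : \bar R :=
  alpha_in setT L Omega r.

(* Main.v *)
Require Import Defs.
From mathcomp Require Import all_boot all_order all_algebra.
From mathcomp Require Import all_classical all_reals ereal.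
From mathcomp Require Import ring lra.
Import Order.TTheory GRing.Theory Num.Theory.
Local Open Scope classical_set_scope.
Local Open Scope ring_scope.
Set Implicit Arguments. Unset Strict Implicit.

Lemma dotvC (R : realType) (l : nat) (x y : 'rV[R]_l) : dotv x y = dotv y x.
Proof. by apply: eq_bigr => i _; rewrite mulrC. Qed.

Lemma dotvDl (R : realType) (l : nat) (x y z : 'rV[R]_l) :
  dotv (x + y) z = dotv x z + dotv y z.
Proof. by rewrite /dotv -big_split; apply: eq_bigr => i _; rewrite mxE mulrDl. Qed.

Lemma dotvZl (R : realType) (l : nat) (a : R) (x z : 'rV[R]_l) :
  dotv (a *: x) z = a * dotv x z.
Proof. by rewrite /dotv mulr_sumr; apply: eq_bigr => i _; rewrite mxE mulrA. Qed.

Lemma dotv0l (R : realType) (l : nat) (z : 'rV[R]_l) : dotv 0 z = 0.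
Proof. by rewrite /dotv big1 // => i _; rewrite mxE mul0r. Qed.

Lemma dotvDr (R : realType) (l : nat) (x y z : 'rV[R]_l) :
  dotv z (x + y) = dotv z x + dotv z y.
Proof. by rewrite !(dotvC z) dotvDl. Qed.

Lemma dotvZr (R : realType) (l : nat) (a : R) (x z : 'rV[R]_l) :
  dotv z (a *: x) = a * dotv z x.
Proof. by rewrite !(dotvC z) dotvZl. Qed.

Lemma dotv_sumr (R : realType) (l k : nat) (p : 'rV[R]_l) (c : 'I_k -> R)
  (v : 'I_k -> 'rV[R]_l) :
  dotv p (\sum_i c i *: v i) = \sum_i c i * dotv p (v i).
Proof.
elim/big_rec2: _ => [|i y1 y2 _ <-]; first by rewrite dotvC dotv0l.
by rewrite dotvDr dotvZr.
Qed.

Lemma sum_rowE (R : realType) (k l : nat) (c : 'I_k -> R) (M : 'M[R]_(k, l)) :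
  \sum_i c i *: row i M = (\row_i c i) *m M.
Proof. by rewrite mulmx_sum_row; apply: eq_bigr => i _; rewrite mxE. Qed.

Lemma rowK_id (R : Type) (k : nat) (u : 'rV[R]_k) : \row_i u 0 i = u.
Proof. by apply/rowP => i; rewrite mxE. Qed.

Lemma dotv_mul (R : realType) (k l : nat) (p : 'rV[R]_l) (u : 'rV[R]_k) (M : 'M[R]_(k, l)) :
  dotv p (u *m M) = \sum_i u 0 i * dotv p (row i M).
Proof. by rewrite mulmx_sum_row dotv_sumr. Qed.

Lemma good_basis (R : realType) (l : nat) (Lam : set 'rV[R]_l) (p : 'rV[R]_l) :
  is_lattice_of setT Lam -> 0 < dotv p p ->
  (forall x, Lam x -> exists z : int, dotv p x = z%:~R) ->
  exists (k : nat) (b : 'I_k.+1 -> 'rV[R]_l) (g : R),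
    g != 0 /\ dotv p (b ord0) = g /\ (forall j, dotv p (b (lift ord0 j)) = 0) /\
    (forall c : 'I_k.+1 -> R, \sum_i c i *: b i = 0 -> forall i, c i = 0) /\
    (forall x, exists c : 'I_k.+1 -> R, x = \sum_i c i *: b i) /\
    (forall x, Lam x <-> exists z : 'I_k.+1 -> int, x = \sum_i (z i)%:~R *: b i).
Proof.
move=> [k0 [b0 [_ [ind0 [span0 lam0]]]]] hp hdual.
have [c0 pE] := span0 p I.
have hb0 i : Lam (b0 i).
  apply/lam0; exists (fun j => ((j == i) : nat)%:Z).
  by rewrite (bigD1 i) //= eqxx big1 ?addr0 ?scale1r // => j /negbTE ->; rewrite scale0r.
have [nf hnf] := choice (fun i => hdual _ (hb0 i)).
destruct k0 as [|k].
  by move: hp; rewrite pE big_ord0 dotv0l ltxx.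
exists k.
set B := \matrix_(i < k.+1) b0 i.
have rowB i : row i B = b0 i by rewrite rowK.
have sumB (c : 'I_k.+1 -> R) : \sum_i c i *: b0 i = (\row_i c i) *m B.
  by rewrite -sum_rowE; apply: eq_bigr => i _; rewrite rowB.
set nz : 'M[int]_(1, k.+1) := \row_i nf i.
case: (int_Smith_normal_form nz) => Lm uL [Rm uR [d _ hS]].
set U := invmx Rm.
have hU1 : U *m Rm = 1%:M by apply: mulVmx.
have hU2 : Rm *m U = 1%:M by apply: mulmxV.
have hnzU : nz *m U = Lm *m \matrix_(i, j) (d`_i *+ (i == j :> nat)).
  by rewrite hS -mulmxA hU2 mulmx1.
set UR := map_mx (fun z : int => z%:~R : R) U^T.
set VR := map_mx (fun z : int => z%:~R : R) Rm^T.
have hVU : VR *m UR = 1%:M by rewrite -map_mxM -trmx_mul hU1 trmx1 map_mx1.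
have hUV : UR *m VR = 1%:M by rewrite -map_mxM -trmx_mul hU2 trmx1 map_mx1.
set b := fun j => row j (UR *m B).
have sumb (c : 'I_k.+1 -> R) : \sum_j c j *: b j = ((\row_j c j) *m UR) *m B.
  by rewrite sum_rowE mulmxA.
have pbj j : dotv p (b j) = ((nz *m U) 0 j)%:~R.
  rewrite /b row_mul dotv_mul !mxE rmorph_sum /=; apply: eq_bigr => i _.
  by rewrite !mxE rowB hnf rmorphM /= mulrC.
have nzUE j : (nz *m U) 0 j = (Lm 0 0 * d`_0) *+ (0 == j :> nat).
  by rewrite hnzU !mxE big_ord1 !mxE mulrnAr.
exists b, (Lm 0 0 * d`_0)%:~R.
have mapE (w : 'rV[int]_(k.+1)) :
    \row_j ((w 0 j)%:~R : R) = map_mx (fun z : int => z%:~R : R) w.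
  by apply/rowP => j; rewrite !mxE.
split.
  apply/negP => /eqP g0.
  have g0' : Lm 0 0 * d`_0 = 0 by apply/eqP; rewrite -(intr_eq0 R); apply/eqP.
  have nzU0 : nz *m U = 0 by apply/matrixP => i j; rewrite ord1 nzUE g0' mul0rn mxE.
  have nz0 : nz = 0 by rewrite -(mulmx1 nz) -hU1 mulmxA nzU0 mul0mx.
  move: hp; rewrite {2}pE dotv_sumr big1 ?ltxx // => i _.
  have : nz 0 i = 0 by rewrite nz0 mxE.
  by rewrite mxE hnf => ->; rewrite mulr0.
split; first by rewrite pbj nzUE /= mulr1n.
split; first by move=> j; rewrite pbj nzUE /= mulr0n.
split.
  move=> c hc i; rewrite sumb in hc.
  set u := (\row_j c j) *m UR in hc.
  have := ind0 (fun i => u 0 i); rewrite sumB rowK_id => /(_ hc) hu0.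
  have u0 : u = 0 by apply/rowP=> j; rewrite hu0 mxE.
  have : \row_j c j = 0 by rewrite -(mulmx1 (\row_j c j)) -hUV mulmxA -/u u0 mul0mx.
  by move/rowP/(_ i); rewrite !mxE.
split.
  move=> x; have [c hc] := span0 x I.
  exists (fun j => ((\row_i c i) *m VR) 0 j).
  by rewrite sumb rowK_id -(mulmxA (\row_i c i) VR UR) hVU mulmx1 hc sumB.
move=> x; split.
  move=> /lam0 [z ->]; set zr : 'M[int]_(1, k.+1) := \row_i z i.
  exists (fun j => (zr *m Rm^T) 0 j).
  rewrite sumB sumb; congr (_ *m B).
  rewrite mapE /UR -map_mxM -mulmxA -trmx_mul hU1 trmx1 mulmx1.
  by apply/rowP => i; rewrite !mxE.
move=> [w ->]; apply/lam0; set wr : 'M[int]_(1, k.+1) := \row_i w i.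
exists (fun i => (wr *m U^T) 0 i).
rewrite sumB sumb; congr (_ *m B).
rewrite mapE /UR map_mxM; congr (_ *m _).
by apply/rowP => j; rewrite !mxE.
Qed.

Definition ext0 (T : zmodType) (k : nat) (c : 'I_k -> T) (i : 'I_k.+1) : T :=
  if unlift ord0 i is Some j then c j else 0.

Lemma ext0_0 (T : zmodType) k (c : 'I_k -> T) : ext0 c ord0 = 0.
Proof. by rewrite /ext0 unlift_none. Qed.

Lemma ext0_lift (T : zmodType) k (c : 'I_k -> T) j : ext0 c (lift ord0 j) = c j.
Proof. by rewrite /ext0 liftK. Qed.

Lemma sublattice (R : realType) (l : nat) (Lam : set 'rV[R]_l) (p : 'rV[R]_l) :
  is_lattice_of setT Lam -> 0 < dotv p p ->
  (forall x, Lam x -> exists z : int, dotv p x = z%:~R) ->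
  is_lattice_of [set x | dotv p x = 0] (Lam `&` [set x | dotv p x = 0]) /\
  (forall q, dotv p q = 0 ->
    (forall x, (Lam `&` [set x | dotv p x = 0]) x -> exists z : int, dotv q x = z%:~R) ->
    exists s : R, forall n : int, forall x, Lam x ->
      exists z : int, dotv (q + (s + n%:~R) *: p) x = z%:~R).
Proof.
move=> hL hp hdual.
have [k [b [g [g0 [pb0 [pbl [ind [span lam]]]]]]]] := good_basis hL hp hdual.
have pdot (c : 'I_k.+1 -> R) : dotv p (\sum_i c i *: b i) = c ord0 * g.
  rewrite dotv_sumr big_ord_recl pb0 big1 ?addr0 // => j _.
  by rewrite pbl mulr0.
split.
  exists k, (fun j => b (lift ord0 j)); split; first by move=> j; exact: pbl.
  split.
    move=> c hc j; rewrite -(ext0_lift c j); apply: ind.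
    by rewrite big_ord_recl ext0_0 scale0r add0r -[X in _ = X]hc; apply: eq_bigr => i _; rewrite ext0_lift.
  split.
    move=> x /= hx; have [c hc] := span x.
    have c0 : c ord0 = 0.
      by move: hx; rewrite hc pdot => /eqP; rewrite mulf_eq0 (negbTE g0) orbF => /eqP.
    exists (fun j => c (lift ord0 j)).
    by rewrite hc big_ord_recl c0 scale0r add0r.
  move=> x; split.
    move=> [/lam [z hz] /= hx].
    have z0 : (z ord0)%:~R = 0 :> R.
      by move: hx; rewrite hz pdot => /eqP; rewrite mulf_eq0 (negbTE g0) orbF => /eqP.
    exists (fun j => z (lift ord0 j)).
    by rewrite hz big_ord_recl z0 scale0r add0r.
  move=> [z hz]; split.
    apply/lam; exists (ext0 z).
    by rewrite hz big_ord_recl ext0_0 scale0r add0r; apply: eq_bigr => i _; rewrite ext0_lift.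
  by rewrite /= hz dotv_sumr big1 // => j _; rewrite pbl mulr0.
have hbL i : Lam (b i).
  apply/lam; exists (fun j => ((j == i) : nat)%:Z).
  by rewrite (bigD1 i) //= eqxx big1 ?addr0 ?scale1r // => j /negbTE ->; rewrite scale0r.
move=> q hq hq0; exists (- dotv q (b ord0) / g) => n x /lam [z ->].
apply/intrP; rewrite dotv_sumr; apply: rpred_sum => i _; apply: rpredM; first exact: intr_int.
rewrite dotvDl dotvZl.
case: (unliftP ord0 i) => [j ->|->].
  rewrite pbl mulr0 addr0; apply/intrP; apply: hq0; split => //; exact: pbl.
have [gz hgz] := hdual _ (hbL ord0).
rewrite pb0 in hgz *.
have -> : dotv q (b ord0) + (- dotv q (b ord0) / g + n%:~R) * g = n%:~R * g.
  by field.
by rewrite hgz -intrM; exact: intr_int.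
Qed.

Lemma ereal_part (R : realType) (a P r : R) (B : \bar R) : 0 < a -> 0 < P -> P <= r ->
  ((a * r / (2 * P))%:E <= B)%E ->
  (a%:E / (B * P%:E) <= (2 / r)%:E)%E /\ (a%:E <= 2%:E * B)%E.
Proof.
move=> ha hP hPr; have hr : 0 < r by apply: lt_le_trans hPr.
case: B => [b| |] hb.
- rewrite lee_fin ler_pdivrMr ?mulr_gt0 // in hb.
  have hb0 : 0 < b by nra.
  have hbP : b * P != 0 by rewrite mulf_neq0 // gt_eqF.
  rewrite -EFinM inver (negbTE hbP) -EFinM; split; rewrite lee_fin.
    rewrite ler_pdivrMr ?mulr_gt0 //.
    rewrite mulrAC ler_pdivlMr //; nra.
  nra.
- rewrite mulyr gtr0_sg // mul1e /= mule0; split; first by rewrite lee_fin; apply: divr_ge0; lra.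
  by rewrite mulry gtr0_sg // mul1e leey.
- by move: hb; rewrite leeNy_eq.
Qed.

Lemma core1 (R : realType) (T y s : R) : 1/2 <= T -> 0 <= y ->
  (forall n : int, `|s + n%:~R| <= T -> 1 <= `|y + (s + n%:~R)|) -> T <= y.
Proof.
move=> hT hy H; rewrite leNgt; apply/negP => yT.
set n := Num.ceil (- y - s).
have h1 : - y - s <= n%:~R by exact: Num.Theory.ceil_ge.
have h2 : (n - 1)%:~R < - y - s by exact: Num.Theory.ceilB1_lt.
rewrite intrB in h2.
have [hle|hgt] := leP `|s + n%:~R| T.
  have := H n hle; rewrite ler_normr; move: hle; rewrite ler_norml => /andP[? ?].
  case/orP => ?; lra.
have Ht : T < s + n%:~R.
  move: hgt; rewrite ltr_normr => /orP[]; lra.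
have := H (n - 1); rewrite intrB ler_norml ler_normr.
have -> : (- T <= s + (n%:~R - 1) <= T) = true by apply/andP; split; lra.
move=> /(_ isT) /orP[]; lra.
Qed.

Lemma core2 (R : realType) (y s : R) : 1/2 <= y ->
  exists n : int, `|s + n%:~R| <= 1 /\ `|y + (s + n%:~R)| <= y.
Proof.
move=> hy; exists (Num.ceil (- s - 1)).
have h1 : - s - 1 <= (Num.ceil (- s - 1))%:~R by exact: Num.Theory.ceil_ge.
have h2 : (Num.ceil (- s - 1) - 1)%:~R < - s - 1 by exact: Num.Theory.ceilB1_lt.
rewrite intrB in h2.
rewrite !ler_norml; split; apply/andP; split; lra.
Qed.

Lemma core1' (R : realType) (T y s : R) : 1/2 <= T ->
  (forall n : int, `|s + n%:~R| <= T -> 1 <= `|y + (s + n%:~R)|) -> T <= `|y|.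
Proof.
move=> hT H; have [hy|hy] := leP 0 y.
  by rewrite ger0_norm //; exact: (@core1 _ _ _ _ hT hy H).
rewrite ltr0_norm //; apply: (@core1 _ _ _ (- s) hT); first lra.
move=> n hn; have := H (- n); rewrite intrN.
have -> : s + - n%:~R = - (- s + n%:~R) by rewrite opprD opprK.
rewrite normrN => /(_ hn).
by rewrite -normrN opprD opprK.
Qed.

Lemma core2' (R : realType) (y s : R) : 1/2 <= `|y| ->
  exists n : int, `|s + n%:~R| <= 1 /\ `|y + (s + n%:~R)| <= `|y|.
Proof.
have [hy|hy] := leP 0 y.
  by rewrite ger0_norm // => /(@core2 _ _ s).
rewrite ltr0_norm // => /(@core2 _ _ (- s)) [n [h1 h2]]; exists (- n).
rewrite intrN.
have -> : s + - n%:~R = - (- s + n%:~R) by rewrite opprD opprK.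
rewrite normrN; split => //.
by rewrite -normrN opprD opprK.
Qed.

Lemma sq_le (R : realType) (t T : R) : `|t| <= T -> t ^+ 2 <= T ^+ 2.
Proof. by rewrite ler_norml => /andP[h1 h2]; nra. Qed.

Unset Implicit Arguments. Set Strict Implicit.

Theorem lemma8p2 (R : realType) (l : nat) (Lam : set 'rV[R]_l)
  (Omega : 'rV[R]_l) (r : R) (p : 'rV[R]_l) :
  is_lattice_of setT Lam ->
  0 < r ->
  dual_ball setT Lam r !=set0 ->
  dual_ball setT Lam r p ->
  alpha Lam Omega r = (dotv p Omega)%:E ->
  0 < dotv p Omega ->
  let E := [set x : 'rV[R]_l | dotv p x = 0] in
  let Lam0 := Lam `&` E in
  let beta := alpha_in E Lam0 Omega (Num.sqrt 3 * r / 2) in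
  is_lattice_of E Lam0 /\
  ((dotv p Omega)%:E / (beta * (normv p)%:E) <= (2 / r)%:E)%E /\
  ((dotv p Omega)%:E <= 2%:E * beta)%E /\
  (alpha Lam Omega (Num.sqrt 7 * r / 2) <= beta)%E.
Proof.
move=> hL hr _ hpb halpha ha E Lam0 beta.
case: hpb => [[_ hpd] [hpn hpr]].
set a := dotv p Omega in halpha ha *.
set P := normv p in hpn hpr *.
have dge0 (x : 'rV[R]_l) : 0 <= dotv x x.
  by apply: sumr_ge0 => i _; rewrite -expr2 sqr_ge0.
have hpp : 0 < dotv p p by move: hpn; rewrite /P /normv sqrtr_gt0.
have hP2 : P ^+ 2 = dotv p p by rewrite /P /normv sqr_sqrtr.
have [hlat hlift] := sublattice hL hpp hpd.
have alpha_lb r' v : dual_ball setT Lam r' v ->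
    (alpha Lam Omega r' <= (`|dotv v Omega|)%:E)%E.
  by move=> hv; apply: ereal_inf_lbound; exists v.
have normle (v : 'rV[R]_l) c : 0 <= c -> dotv v v <= c ^+ 2 -> normv v <= c.
  by move=> hc hv; rewrite /normv -(ger0_norm hc) -sqrtr_sqr ler_sqrt // sqr_ge0.
have keyq q : dual_ball E Lam0 (Num.sqrt 3 * r / 2) q ->
    a * r / (2 * P) <= `|dotv q Omega| /\
    exists v, dual_ball setT Lam (Num.sqrt 7 * r / 2) v /\
      `|dotv v Omega| <= `|dotv q Omega|.
  move=> [[hqE hqd] [hqn hqr]].
  have [s hs] := hlift q hqE hqd.
  set Q := dotv q q.
  have hQ0 : 0 < Q by move: hqn; rewrite /normv sqrtr_gt0.
  have h3 : Num.sqrt 3 ^+ 2 = 3 :> R by rewrite sqr_sqrtr.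
  have hQ : Q <= 3 * r ^+ 2 / 4.
    have hN : normv q ^+ 2 = Q by rewrite /normv sqr_sqrtr.
    have hN0 : 0 <= normv q by rewrite /normv sqrtr_ge0.
    have : normv q ^+ 2 <= (Num.sqrt 3 * r / 2) ^+ 2.
      by rewrite ler_pXn2r // ?nnegrE //; apply: le_trans hqr.
    by rewrite hN !exprMn h3 [(_^-1)^+2]expr2; lra.
  have qp : dotv q p = 0 by rewrite dotvC.
  set x := dotv q Omega.
  have vv (t : R) : dotv (q + t *: p) (q + t *: p) = Q + t ^+ 2 * dotv p p.
    rewrite !dotvDl !dotvDr !dotvZl !dotvZr qp hqE -/Q; ring.
  have vO t : dotv (q + t *: p) Omega = x + t * a by rewrite dotvDl dotvZl.
  have vball (n : int) c : 0 <= c ->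
      Q + (s + n%:~R) ^+ 2 * dotv p p <= c ^+ 2 ->
      dual_ball setT Lam c (q + (s + n%:~R) *: p).
    move=> hc hle; split; first by split => //; exact: hs.
    split; last by apply: normle; rewrite ?vv.
    rewrite /normv sqrtr_gt0 vv; apply: (lt_le_trans hQ0); rewrite lerDl.
    by apply: mulr_ge0 => //; exact: sqr_ge0.
  have hT : 1 / 2 <= r / (2 * P) by rewrite ler_pdivlMr ?mulr_gt0 //; lra.
  have TP : r / (2 * P) * P = r / 2.
    by field; exact: lt0r_neq0.
  have ex : a * `|x / a| = `|x|.
    by rewrite -{1}(gtr0_norm ha) -normrM mulrC divfK // lt0r_neq0.
  have key1 : r / (2 * P) <= `|x / a|.
    apply: (@core1' R (r / (2 * P)) (x / a) s hT) => n hn.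
    set t := s + n%:~R.
    have ht2 : t ^+ 2 <= (r / (2 * P)) ^+ 2.
      exact: sq_le.
    have hle : Q + t ^+ 2 * dotv p p <= r ^+ 2.
      rewrite -hP2.
      have : t ^+ 2 * P ^+ 2 <= (r / (2 * P)) ^+ 2 * P ^+ 2.
        by apply: ler_wpM2r => //; exact: sqr_ge0.
      have e4 : (r / 2) ^+ 2 = r ^+ 2 / 4 by field.
      rewrite -!exprMn TP e4; lra.
    have := alpha_lb r _ (vball n r (ltW hr) hle).
    rewrite halpha lee_fin vO.
    have -> : x + t * a = a * (x / a + t) by field; apply: lt0r_neq0.
    by rewrite normrM (gtr0_norm ha) -{1}(mulr1 a) ler_pM2l.
  split.
    by rewrite -mulrA -ex ler_pM2l.
  have hy : 1 / 2 <= `|x / a| by apply: le_trans hT key1.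
  have [n [hn1 hn2]] := @core2' R (x / a) s hy.
  set t := s + n%:~R in hn1 hn2.
  have h7 : Num.sqrt 7 ^+ 2 = 7 :> R by rewrite sqr_sqrtr.
  have h70 : 0 <= Num.sqrt 7 :> R by rewrite sqrtr_ge0.
  have hle : Q + t ^+ 2 * dotv p p <= (Num.sqrt 7 * r / 2) ^+ 2.
    have ht : t ^+ 2 <= 1 by rewrite -(expr1n _ 2); exact: sq_le.
    have hpr2 : dotv p p <= r ^+ 2 by rewrite -hP2; nra.
    have : t ^+ 2 * dotv p p <= 1 * r ^+ 2.
      by apply: ler_pM => //; exact: sqr_ge0.
    rewrite !exprMn h7 [(_^-1)^+2]expr2; lra.
  exists (q + t *: p); split.
    apply: (vball n) => //; apply: divr_ge0; [apply: mulr_ge0 => //; lra | lra].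
  rewrite vO.
  have -> : x + t * a = a * (x / a + t) by field; apply: lt0r_neq0.
  by rewrite normrM (gtr0_norm ha) -ex ler_pM2l.
have hb : ((a * r / (2 * P))%:E <= beta)%E.
  apply: le_ereal_inf_tmp => _ [q hq <-]; rewrite lee_fin; exact: (keyq q hq).1.
have [g1 g2] := ereal_part ha hpn hpr hb.
split => //; split => //; split => //.
apply: le_ereal_inf_tmp => _ [q hq <-].
have [_ [v [hv hle]]] := keyq q hq.
by apply: le_trans (alpha_lb _ _ hv) _; rewrite lee_fin.
Qed.
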